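(* Let $m\in\mathbb{N}$ and $\beta\in(1,m+1]$. Suppose that for every $x\in(0,\frac{m}{\beta-1})$ there exist $n\ge0$ and maps $a_1,\ldots,a_n\in\{T_{\beta,0},\ldots,T_{\beta,m}\}$ such that $(a_j\circ\cdots\circ a_1)(x)\in I_{\beta,m}$ for all $1\le j\le n$ and $(a_n\circ\cdots\circ a_1)(x)$ lies in the interior of some choice interval. Then $\Omega_{\beta,m}(x)$ is uncountable for every $x\in(0,\frac{m}{\beta-1})$.
   Context: $I_{\beta,m}=[0,\frac{m}{\beta-1}]$ and $T_{\beta,i}(x)=\beta x-i$ for $i\in\{0,\ldots,m\}$. $\Omega_{\beta,m}(x)$ is the set of sequences $(a_i)_{i=1}^\infty\in\{T_{\beta,0},\ldots,T_{\beta,m}\}^{\mathbb{N}}$ with $(a_n\circ\cdots\circ a_1)(x)\in I_{\beta,m}$ for all $n\in\mathbb{N}$. For $i\in\{1,\ldots,m\}$ the $i$-th choice interval is $[\frac{i}{\beta},\frac{(i-1)\beta+m-(i-1)}{\beta(\beta-1)}]$. *)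

(* Defs.v *)
From Stdlib Require Import Reals.
Open Scope R_scope.

(* A map T_{beta,i}(x) = beta x - i is encoded by its index i : nat
   (distinct indices give distinct maps since beta > 1, so this is a faithful
   encoding of {T_{beta,0},...,T_{beta,m}}). *)
Definition T (beta : R) (i : nat) (x : R) : R := beta * x - INR i.

Definition in_I (beta : R) (m : nat) (y : R) : Prop :=
  0 <= y <= INR m / (beta - 1).

(* orbit beta a x n = (a_n o ... o a_1)(x), where a_{k+1} is encoded by a k;
   orbit beta a x 0 = x. *)
Fixpoint orbit (beta : R) (a : nat -> nat) (x : R) (n : nat) : R :=
  match n with
  | O => x
  | S k => T beta (a k) (orbit beta a x k)
  end.

Definition Omega (beta : R) (m : nat) (x : R) : (nat -> nat) -> Prop :=
  fun a => (forall k, (a k <= m)%nat) /\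
           (forall n, (1 <= n)%nat -> in_I beta m (orbit beta a x n)).

Definition in_choice_interior (beta : R) (m i : nat) (y : R) : Prop :=
  (1 <= i <= m)%nat /\
  INR i / beta < y < ((INR i - 1) * beta + INR m - (INR i - 1)) / (beta * (beta - 1)).

(* A set of sequences is countable if some sequence of sequences enumerates
   it (this includes finite and empty sets). *)
Definition countable_set (S : (nat -> nat) -> Prop) : Prop :=
  exists f : nat -> (nat -> nat), forall a, S a -> exists k, f k = a.

Definition uncountable_set (S : (nat -> nat) -> Prop) : Prop := ~ countable_set S.

(* Main.v *)
Require Import Defs.
From Stdlib Require Import Reals.
From Stdlib Require Import Lra Lia Psatz Classical ClassicalEpsilon.
Open Scope R_scope.

Record St := mkSt { sz : R; sr : nat; sw : nat -> nat; si : nat; sk : nat }.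

Definition choice_sym (f : nat -> nat -> nat) (p : nat) (s : St) : nat :=
  if Nat.eqb (si s) (f (sk s) p) then (si s - 1)%nat else si s.
Definition out f p s := match sr s with O => choice_sym f p s | S _ => sw s 0%nat end.
Definition stepSt beta (N : R -> nat) (W : R -> nat -> nat) (Ic : R -> nat) f p s :=
  match sr s with
  | S r => mkSt (T beta (sw s 0%nat) (sz s)) r (fun t => sw s (S t)) (si s) (sk s)
  | O => let z' := T beta (choice_sym f p s) (sz s) in
         mkSt z' (N z') (W z') (Ic z') (S (sk s)) end.
Fixpoint stSeq beta N W Ic f x p :=
  match p with
  | O => mkSt x (N x) (W x) (Ic x) 0
  | S p => stepSt beta N W Ic f p (stSeq beta N W Ic f x p) end.

Lemma orbit_shift beta a x j :
  orbit beta (fun t => a (S t)) (T beta (a 0%nat) x) j = orbit beta a x (S j).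
Proof. induction j; simpl; [reflexivity | rewrite IHj; reflexivity]. Qed.

Lemma choice_next beta m i y : 1 < beta -> in_choice_interior beta m i y ->
  0 < T beta i y < INR m / (beta - 1) /\ 0 < T beta (i - 1) y < INR m / (beta - 1).
Proof.
  intros Hb [Hi [H1 H2]]. destruct i as [|j]; [lia|].
  replace (S j - 1)%nat with j by lia. unfold T. rewrite S_INR in *.
  assert (Hb1 : beta - 1 > 0) by lra.
  apply (Rmult_lt_compat_r beta) in H1; [|lra].
  replace ((INR j + 1) / beta * beta) with (INR j + 1) in H1 by (field; lra).
  apply (Rmult_lt_compat_r (beta * (beta - 1))) in H2; [|nra].
  replace ((INR j + 1 - 1) * beta + INR m - (INR j + 1 - 1)) with
    (INR j * beta + INR m - INR j) in H2 by ring.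
  replace ((INR j * beta + INR m - INR j) / (beta * (beta - 1)) * (beta * (beta - 1)))
    with (INR j * beta + INR m - INR j) in H2 by (field; lra).
  assert (Hu : beta * y - INR j < INR m / (beta - 1)).
  { apply (Rmult_lt_reg_r (beta - 1)); [lra|].
    replace (INR m / (beta - 1) * (beta - 1)) with (INR m) by (field; lra). nra. }
  split; split; lra.
Qed.

Section Key.
Variables (m : nat) (beta : R) (Hb : 1 < beta).
Variables (N : R -> nat) (W : R -> nat -> nat) (Ic : R -> nat).
Definition Spec y n a i :=
  (forall k, (k < n)%nat -> (a k <= m)%nat) /\
  (forall j, (1 <= j <= n)%nat -> in_I beta m (orbit beta a y j)) /\
  in_choice_interior beta m i (orbit beta a y n).
Hypothesis HS : forall y, 0 < y < INR m / (beta - 1) -> Spec y (N y) (W y) (Ic y).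
Variables (f : nat -> nat -> nat) (x : R) (Hx : 0 < x < INR m / (beta - 1)).

Definition Inv s := in_I beta m (sz s) /\ Spec (sz s) (sr s) (sw s) (si s).

Let st := stSeq beta N W Ic f x.
Let a := fun p => out f p (st p).

Lemma open_I y : 0 < y < INR m / (beta - 1) -> in_I beta m y.
Proof. unfold in_I; lra. Qed.

Lemma inv_all p : Inv (st p).
Proof.
  induction p.
  - split; [apply open_I; exact Hx | apply HS; exact Hx].
  - unfold st; simpl. fold st. destruct IHp as [HI [H1 [H2 H3]]].
    unfold stepSt. destruct (sr (st p)) as [|r] eqn:E.
    + simpl in H3. destruct (choice_next _ _ _ _ Hb H3) as [Ha Hc].
      assert (Hz : 0 < T beta (choice_sym f p (st p)) (sz (st p)) < INR m / (beta - 1)).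
      { unfold choice_sym. destruct (Nat.eqb _ _); auto. }
      split; simpl; [apply open_I; exact Hz | apply HS; exact Hz].
    + split; simpl.
      * change (in_I beta m (orbit beta (sw (st p)) (sz (st p)) 1)). apply H2; lia.
      * split; [|split].
        -- intros k Hk. apply H1. lia.
        -- intros j Hj. rewrite orbit_shift. apply H2. lia.
        -- rewrite orbit_shift. exact H3.
Qed.

Lemma orbit_eq p : orbit beta a x p = sz (st p).
Proof.
  induction p; [reflexivity|].
  simpl. rewrite IHp. unfold a, st; simpl. fold st.
  unfold out, stepSt. destruct (sr (st p)); reflexivity.
Qed.

Lemma a_le p : (a p <= m)%nat.
Proof.
  destruct (inv_all p) as [_ [H1 [_ [Hi _]]]]. unfold a, out.
  destruct (sr (st p)) eqn:E.
  - unfold choice_sym. destruct (Nat.eqb _ _); lia.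
  - apply H1. lia.
Qed.

Lemma progress d : forall p, sr (st p) = d ->
  exists q, sk (st q) = sk (st p) /\ sr (st q) = 0%nat.
Proof.
  induction d; intros p Hp.
  - exists p; auto.
  - destruct (IHd (S p)) as [q [Hq1 Hq2]].
    + unfold st; simpl; fold st. unfold stepSt. rewrite Hp. reflexivity.
    + exists q. split; auto. rewrite Hq1. unfold st; simpl; fold st.
      unfold stepSt. rewrite Hp. reflexivity.
Qed.

Lemma reach k : exists q, sk (st q) = k /\ sr (st q) = 0%nat.
Proof.
  induction k.
  - destruct (progress _ 0 eq_refl) as [q [H1 H2]]. exists q. split; auto.
  - destruct IHk as [q [H1 H2]].
    destruct (progress _ (S q) eq_refl) as [q' [H3 H4]]. exists q'. split; auto.
    rewrite H3. unfold st; simpl; fold st. unfold stepSt. rewrite H2. simpl.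
    rewrite H1. reflexivity.
Qed.

Lemma key : Omega beta m x a /\ forall k, a <> f k.
Proof.
  split.
  - split; [exact a_le|]. intros n _. rewrite orbit_eq. apply inv_all.
  - intros k Hk. destruct (reach k) as [q [H1 H2]].
    destruct (inv_all q) as [_ [_ [_ [Hi _]]]].
    assert (Ha : a q = f k q) by (rewrite Hk; reflexivity).
    unfold a, out in Ha. rewrite H2 in Ha. unfold choice_sym in Ha.
    rewrite H1 in Ha. destruct (Nat.eqb (si (st q)) (f k q)) eqn:E.
    + apply Nat.eqb_eq in E. lia.
    + apply Nat.eqb_neq in E. lia.
Qed.
End Key.

Theorem proposition2p3 (m : nat) (beta : R) :
  1 < beta <= INR m + 1 ->
  (forall x : R, 0 < x < INR m / (beta - 1) ->
     exists (n : nat) (a : nat -> nat),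
       (forall k, (k < n)%nat -> (a k <= m)%nat) /\
       (forall j, (1 <= j <= n)%nat -> in_I beta m (orbit beta a x j)) /\
       exists i : nat, in_choice_interior beta m i (orbit beta a x n)) ->
  forall x : R, 0 < x < INR m / (beta - 1) -> uncountable_set (Omega beta m x).
Proof.
  intros Hb H x Hx [f Hf].
  assert (Hc : forall y, {t : nat * (nat -> nat) * nat |
            0 < y < INR m / (beta - 1) -> Spec m beta y (fst (fst t)) (snd (fst t)) (snd t)}).
  { intro y. apply constructive_indefinite_description.
    destruct (classic (0 < y < INR m / (beta - 1))) as [h|h].
    - destruct (H y h) as (n & a & h1 & h2 & i & h3).
      exists (n, a, i). intros _. split; [|split]; assumption.
    - exists (0%nat, fun _ => 0%nat, 0%nat). tauto. }
  destruct (key m beta (proj1 Hb) (fun y => fst (fst (proj1_sig (Hc y))))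
      (fun y => snd (fst (proj1_sig (Hc y)))) (fun y => snd (proj1_sig (Hc y)))
      (fun y hy => proj2_sig (Hc y) hy) f x Hx) as [HO Hne].
  destruct (Hf _ HO) as [k Hk]. exact (Hne k (eq_sym Hk)).
Qed.
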